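(* Let $G=(V,E)$ be a directed graph with edge weights $\omega:E\to\mathbb{R}^{\geq 0}$, let $s,t\in V$ and $k\geq 1$. Let $G'$ be obtained from $G$ by replacing every edge $e$ by $k$ parallel copies $e_1,\dots,e_k$, each of weight $\omega(e)$. Consider solutions consisting of $k$ pairwise edge-disjoint $s\leadsto t$ paths $\mathcal{F}=\{F_1,\dots,F_k\}$ in $G'$ and one $t\leadsto s$ path $B$ in $G'$, with cost equal to the total weight of the set of edges of $G'$ used by $F_1,\dots,F_k,B$. Then there exists an optimum (minimum cost) solution $(\mathcal{F},B)$ that is reverse-compatible.
   Context: For an $s\leadsto t$ path $F$ and a $t\leadsto s$ path $B$, let $P_1,\dots,P_d$ be the maximal sub-paths shared by $F$ and $B$, indexed so that $P_j$ is the $j$-th such sub-path encountered while traversing $F$. The pair $(F,B)$ is path-reverse-compatible if for every $j\in[d]$, $P_j$ is the $(d-j+1)$-th of these sub-paths encountered while traversing $B$. A pair $(\mathcal{F},B)$ with $\mathcal{F}=\{F_1,\dots,F_r\}$ a set of $s\leadsto t$ paths is reverse-compatible if $(F_i,B)$ is path-reverse-compatible for every $i$. (This edge-copy setting models the 2-SCSS-$(k,1)$ problem, in which one seeks $k$ paths $s\leadsto t$ and one path $t\leadsto s$ minimizing $\sum_e\omega(e)\max\{\#\{i: e\in F_i\},\ \#\{B\ni e\}\}$.) *)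

(* Defs.v *)
From HB Require Import structures.
From mathcomp Require Import all_boot all_order all_algebra.
Set Implicit Arguments. Unset Strict Implicit. Unset Printing Implicit Defensive.
Import Order.TTheory GRing.Theory Num.Theory.

(* A directed (multi)graph: vertex type V, edge type E, each edge e goes
   from tl e to hd e.  The k-copy graph G' has edge type (E * 'I_k):
   the pair (e, i) is the (i+1)-th parallel copy of e. *)
Section Defs.
Variables (V E : finType) (tl hd : E -> V) (k : nat).

Definition E' := (E * 'I_k)%type.
Definition tl' (x : E') : V := tl x.1.
Definition hd' (x : E') : V := hd x.1.

Fixpoint walk' (u v : V) (es : seq E') : bool :=
  match es with
  | [::] => u == v
  | e :: es' => (tl' e == u) && walk' (hd' e) v es'
  end.

Definition is_path (u v : V) (es : seq E') : bool :=
  walk' u v es && uniq (u :: map hd' es).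

(* Maximal runs (contiguous blocks) of elements of s satisfying p,
   listed in the order of s. *)
Fixpoint runs_aux (T : Type) (p : pred T) (cur : seq T) (s : seq T) : seq (seq T) :=
  match s with
  | [::] => if cur is [::] then [::] else [:: rev cur]
  | x :: s' =>
      if p x then runs_aux p (x :: cur) s'
      else if cur is [::] then runs_aux p [::] s'
           else rev cur :: runs_aux p [::] s'
  end.
Definition runs (T : Type) (p : pred T) (s : seq T) := runs_aux p [::] s.

(* The maximal sub-paths shared by F and B, in the order met while
   traversing F (resp. B). *)
Definition shared_in_F (F B : seq E') : seq (seq E') := runs (mem B) F.
Definition shared_in_B (F B : seq E') : seq (seq E') := runs (mem F) B.

Definition path_rev_compat (F B : seq E') : Prop :=
  let PF := shared_in_F F B in
  let PB := shared_in_B F B in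
  size PF = size PB /\
  forall j, j < size PF -> nth [::] PF j = nth [::] PB (size PF - j.+1).

Definition rev_compat (Fs : 'I_k -> seq E') (B : seq E') : Prop :=
  forall i, path_rev_compat (Fs i) B.

Definition feasible (s t : V) (Fs : 'I_k -> seq E') (B : seq E') : Prop :=
  [/\ forall i, is_path s t (Fs i),
      forall i j, i != j -> forall e, e \in Fs i -> e \notin Fs j
    & is_path t s B].

Definition cost (R : nmodType) (w : E -> R) (Fs : 'I_k -> seq E') (B : seq E') : R :=
  (\sum_(x : E' | [exists i, x \in Fs i] || (x \in B)) w x.1)%R.

End Defs.

(* Main.v *)
Require Import Defs.
From HB Require Import structures.
From mathcomp Require Import all_boot all_order all_algebra zify.
From Stdlib Require Import Classical FunctionalExtensionality.
Set Implicit Arguments. Unset Strict Implicit. Unset Printing Implicit Defensive.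

Section Chg.
Variable L : eqType.
Fixpoint chg (l : seq L) : nat :=
  if l is x :: r then (if r is y :: _ then (x != y) + chg r else 0) else 0.

Lemma chg_cat p x r : chg (p ++ x :: r) = chg (rcons p x) + chg (x :: r).
Proof.
elim: p => [|a p IH] //=.
case: p IH => [|b p] /= IH; first by rewrite addn0.
by rewrite IH addnA.
Qed.

Lemma chg_rcons2 p a b : chg (rcons (rcons p a) b) = chg (rcons p a) + (a != b).
Proof.
have -> : rcons (rcons p a) b = p ++ [:: a; b] by rewrite -!cats1 -catA.
by rewrite chg_cat /= addn0.
Qed.

Lemma chg_cons2 x y r : chg (x :: y :: r) = (x != y) + chg (y :: r).
Proof. by []. Qed.

Lemma chg_const h r : all (pred1 h) r -> chg (h :: r) = 0.
Proof.
elim: r h => [|y r IH] h // /andP[/eqP yh hr]; subst y.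
by rewrite chg_cons2 eqxx (IH h hr).
Qed.

Lemma chg0 h r : chg (h :: r) = 0 -> all (pred1 h) r.
Proof.
elim: r h => [|y r IH] h //; rewrite chg_cons2 => /eqP; rewrite addn_eq0 eqb0 negbK.
case/andP => /eqP hy /eqP /IH; subst y => H.
by rewrite /= eqxx H.
Qed.

Lemma tri (a b c : L) : (a != c) <= (a != b) + (b != c).
Proof.
by case: (a =P b) => [<-|ab] //; case: (a != c).
Qed.

Lemma chg_tri h r : (h != last h r) <= chg (h :: r).
Proof.
elim: r h => [|y r IH] h; first by rewrite /= eqxx.
have -> : last h (y :: r) = last y r by [].
by rewrite chg_cons2; apply: leq_trans (tri h y (last y r)) _; rewrite leq_add2l IH.
Qed.

Lemma chg_del p m q : chg (p ++ q) <= chg (p ++ m ++ q).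
Proof.
case: m => [|h m0] //.
case/lastP: p => [|p1 pl]; case: q => [|q0 q1].
- by [].
- by rewrite !cat0s chg_cat leq_addl.
- rewrite !cats0 chg_cat chg_rcons2 -addnA; exact: leq_addr.
- have e1 : chg (rcons p1 pl ++ q0 :: q1) = chg (rcons p1 pl) + (pl != q0) + chg (q0 :: q1).
    by rewrite chg_cat chg_rcons2.
  have e2 : chg (rcons p1 pl ++ (h :: m0) ++ q0 :: q1) =
      chg (rcons p1 pl) + (pl != h) + (chg (rcons (h :: m0) q0) + chg (q0 :: q1)).
    by rewrite cat_cons chg_cat chg_rcons2 -cat_cons chg_cat.
  rewrite e1 e2 -!addnA leq_add2l addnA leq_add2r.
  apply: leq_trans (tri pl h q0) _; rewrite leq_add2l.
  by have := chg_tri h (rcons m0 q0); rewrite last_rcons rcons_cons.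
Qed.

Lemma chg_mid h m q : last h m = h -> chg (h :: m ++ q) = chg (h :: m) + chg (h :: q).
Proof.
move=> lh; case: q => [|q0 q1]; first by rewrite cats0 addn0.
rewrite -cat_cons chg_cat chg_cons2.
have -> : h :: m = rcons (belast h m) h by rewrite lastI lh.
by rewrite chg_rcons2 addnA.
Qed.

End Chg.

Lemma chg_repl (L : eqType) (P Q m1 m2 : seq L) h : last h m1 = h -> last h m2 = h ->
  chg (h :: m2) < chg (h :: m1) -> chg (P ++ h :: m2 ++ Q) < chg (P ++ h :: m1 ++ Q).
Proof. by move=> l1 l2 lt; rewrite !chg_cat !chg_mid // ltn_add2l ltn_add2r. Qed.

Lemma last_pred1 (L : eqType) (h : L) m : all (pred1 h) m -> last h m = h.
Proof. by elim: m h => [|y m IH] h //= /andP[/eqP -> /IH]. Qed.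

Section Runs.
Variable T : eqType.
Implicit Types (p q : pred T) (s c X : seq T).

Lemma runs_eq_in p q cur s : {in s, p =1 q} -> runs_aux p cur s = runs_aux q cur s.
Proof.
elim: s cur => [|x s IH] cur //= H.
rewrite H ?mem_head //; case: (q x); rewrite IH //; by move=> y ys; apply: H; rewrite inE ys orbT.
Qed.

Lemma runs_skip p s c : all (predC p) c -> runs_aux p [::] (c ++ s) = runs_aux p [::] s.
Proof. by elim: c => [|x c IH] //= /andP[/negbTE -> /IH]. Qed.

Lemma runs_take p cur X s : all p X -> runs_aux p cur (X ++ s) = runs_aux p (catrev X cur) s.
Proof. by elim: X cur => [|x X IH] cur //= /andP[-> /IH]. Qed.

Lemma runs_cat p cur s1 x s2 : ~~ p x ->
  runs_aux p cur (rcons s1 x ++ s2) = runs_aux p cur (rcons s1 x) ++ runs_aux p [::] s2.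
Proof.
move=> px; elim: s1 cur => [|y s1 IH] cur /=.
  by rewrite (negbTE px); case: cur.
case: (p y); first exact: IH.
case: cur => [|z cur]; first exact: IH.
by rewrite IH.
Qed.

Lemma runs_nil p s : all (predC p) s -> runs p s = [::].
Proof. by move=> H; rewrite /runs -[s]cats0 runs_skip. Qed.

Lemma runs_fin p acc F2 : acc != [::] ->
  (if F2 is y :: _ then ~~ p y else true) ->
  runs_aux p acc F2 = rev acc :: runs p F2.
Proof.
case: acc => [|a acc] // _; case: F2 => [|y F2] //= /negbTE H; by rewrite /runs /= H.
Qed.

Lemma runs_front p c X F2 : all (predC p) c -> all p X -> X != [::] ->
  (if F2 is y :: _ then ~~ p y else true) ->
  runs p (c ++ X ++ F2) = X :: runs p F2.
Proof.
move=> Hc HX HX0 HF2; rewrite /runs runs_skip // runs_take // runs_fin //.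
  by rewrite catrevE cats0 revK.
by rewrite catrevE cats0 -size_eq0 size_rev size_eq0.
Qed.

Lemma runs_one p X c : all (predC p) c -> all p X -> X != [::] ->
  runs p (X ++ c) = [:: X].
Proof.
move=> Hc HX HX0; rewrite -[X ++ c]cat0s (@runs_front p [::] X c) //.
  by rewrite runs_nil.
by case: c Hc => [|y c] //= /andP[].
Qed.

Lemma runs_back p B1 X c : all (predC p) c -> all p X -> X != [::] ->
  (forall B0 x, B1 = rcons B0 x -> ~~ p x) ->
  runs p (B1 ++ X ++ c) = rcons (runs p B1) X.
Proof.
move=> Hc HX HX0; case/lastP: B1 => [|B0 x] /= HB.
  by rewrite runs_one.
have px := HB _ _ (erefl _).
rewrite /runs runs_cat // -[rcons (runs_aux _ _ _) X]cats1; congr (_ ++ _).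
exact: runs_one.
Qed.


Lemma idx_drop s n x : uniq s -> x \in drop n s -> n <= index x s.
Proof.
move=> u xd; rewrite leqNgt; apply/negP => lt.
have xt : x \in take n s by rewrite in_take // (mem_drop xd).
move: u; rewrite -(cat_take_drop n s) cat_uniq => /and3P[_ /hasP H _]; apply: H.
by exists x.
Qed.

Definition Hadj (F B : seq T) := forall x y, x \in F -> y \in F -> x \in B -> y \in B ->
  (index y F == (index x F).+1) = (index y B == (index x B).+1).
Definition Hmono (F B : seq T) := forall x y z, x \in F -> y \in F -> x \in B -> y \in B ->
  z \in F -> index x F < index y F -> index x B < index y B ->
  index x F <= index z F <= index y F -> z \in B.

Lemma RC n : forall F B, size F <= n -> uniq F -> uniq B -> Hadj F B -> Hmono F B ->
  runs (mem B) F = rev (runs (mem F) B).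
Proof.
elim: n => [|n IH] F B szF uF uB hadj hmono.
  case: F szF {uF hadj hmono} => // _.
  by rewrite (@runs_nil (mem [::]) B) //; apply/allP => x.
case: (boolP (has (mem B) F)) => hasFB; last first.
  rewrite runs_nil; last by apply/allP => x xF /=; apply: contra hasFB => xB; apply/hasP; exists x.
  rewrite runs_nil //; apply/allP => x xB /=; apply: contra hasFB => xF; apply/hasP; by exists x.
have [a0 _ _] := hasP hasFB.
set i0 := find (mem B) F.
have i0lt : i0 < size F by rewrite -has_find.
set a := nth a0 F i0.
have aB : a \in B by exact: (nth_find a0 hasFB).
have aF : a \in F by exact: mem_nth.
have ia0 : index a F = i0 by rewrite index_uniq.
set c := take i0 F; set rest := drop i0 F.
set j := find (predC (mem B)) rest.
set X := take j rest; set F2 := drop j rest.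
have HF : F = c ++ X ++ F2 by rewrite /X /F2 cat_take_drop /c /rest cat_take_drop.
have jle : j <= size rest by exact: find_size.
have szX : size X = j by rewrite size_takel.
have szrest : size rest = size F - i0 by rewrite size_drop.
have nthX : forall d, d < size X -> nth a0 X d = nth a0 F (i0 + d).
  by move=> d dlt; rewrite nth_take -?szX // nth_drop.
have Hc : all (predC (mem B)) c.
  apply/allP => x xc /=; have := index_ltn xc; rewrite -/i0 => lt.
  have xF : x \in F by exact: mem_take xc.
  by move: (before_find a0 lt); rewrite nth_index // => /negbT.
have HX : all (mem B) X.
  apply/allP => x xX; have := index_ltn xX => lt.
  have xr : x \in rest by exact: mem_take xX.
  by have := before_find a0 lt; rewrite (nth_index a0 xr) /= => /negbFE.
have jpos : 0 < j.
  rewrite lt0n; apply/negP => /eqP j0.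
  have hr : has (predC (mem B)) rest by rewrite has_find -/j j0 szrest subn_gt0.
  by have := nth_find a0 hr; rewrite -/j j0 nth_drop addn0 -/a /= aB.
have X0 : X != [::] by rewrite -size_eq0 szX -lt0n.
have HF2 : (if F2 is y :: _ then ~~ (y \in B) else true) : bool.
  case E: F2 => [|y F3] //.
  have : 0 < size F2 by rewrite E.
  rewrite size_drop subn_gt0 => jl.
  have hr : has (predC (mem B)) rest by rewrite has_find.
  have := nth_find a0 hr; rewrite -/j.
  have -> : nth a0 rest j = y by rewrite -[j]addn0 -nth_drop -/F2 E.
  by [].
have RF : runs (mem B) F = X :: runs (mem B) F2 by rewrite {1}HF (runs_front Hc HX X0 HF2).
set ia := index a B.
have idxXF : forall d, d < size X -> index (nth a0 X d) F = i0 + d.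
  move=> d dlt; rewrite nthX // index_uniq //.
  by rewrite -ltn_subRL -szrest (leq_trans dlt) // szX.
have XB : forall d, d < size X -> nth a0 X d \in B by move=> d dlt; apply: (allP HX); exact: mem_nth.
have XF : forall d, d < size X -> nth a0 X d \in F.
  by move=> d dlt; rewrite HF !mem_cat mem_nth ?orbT.
have idxXB : forall d, d < size X -> index (nth a0 X d) B = ia + d.
  elim=> [|d IHd] dlt; first by rewrite addn0 nthX // addn0.
  have dlt' : d < size X by exact: ltnW.
  apply/eqP; rewrite addnS -(IHd dlt') -hadj ?XB ?XF //.
  by rewrite !idxXF // addnS.
have X0pos : 0 < size X by rewrite lt0n size_eq0.
have szB : ia + size X <= size B.
  have pl : (size X).-1 < size X by rewrite ltn_predL.
  have h : index (nth a0 X (size X).-1) B < size B by rewrite index_mem XB.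
  by rewrite idxXB // in h; rewrite -(prednK X0pos) addnS.
set B1 := take ia B; set c' := drop (ia + size X) B.
have HB : B = B1 ++ X ++ c'.
  have -> : X = take (size X) (drop ia B).
    have szd : size X <= size (drop ia B).
      by rewrite size_drop leq_subRL ?szB // (leq_trans _ szB) ?leq_addr.
    apply: (@eq_from_nth _ a0); first by rewrite size_takel.
    move=> d; rewrite size_takel // => dlt.
    have dlt2 : d < size X by rewrite szX.
    rewrite nth_take // nth_drop -(idxXB d dlt2) nth_index //; exact: XB.
  by rewrite /c' (addnC ia) -drop_drop /B1 !cat_take_drop.
have Hc' : all (predC (mem F)) c'.
  apply/allP => y yc' /=; apply/negP => yF.
  have yB : y \in B by exact: mem_drop yc'.
  have iyB := idx_drop uB yc'.
  have iyF : i0 <= index y F.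
    rewrite leqNgt; apply/negP => lt.
    by move: (before_find a0 lt); rewrite nth_index // => /negbT/negP; apply.
  have yna : y != a by apply/eqP => ya; move: iyB; rewrite ya -/ia -{2}[ia]addn0 leq_add2l leqn0 size_eq0 (negbTE X0).
  have iyF' : i0 < index y F.
    rewrite ltn_neqAle iyF andbT; apply/negP => /eqP e.
    by move/eqP: yna; apply; rewrite -(nth_index a0 yF) -e.
  case: (ltnP (index y F) (i0 + size X)) => hy.
    have dlt : index y F - i0 < size X by rewrite ltn_subLR // ltnW.
    have := idxXB _ dlt; rewrite nthX // subnKC ?(ltnW iyF') // nth_index // => e.
    by move: iyB; rewrite e leq_add2l leqNgt dlt.
  have lt2 : i0 + size X < size F by rewrite (leq_ltn_trans hy) // index_mem.
  have zF2 : nth a0 F (i0 + size X) = nth a0 F2 0 by rewrite /F2 nth_drop /rest nth_drop addn0 szX.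
  have szF2 : 0 < size F2 by rewrite /F2 size_drop szrest subn_gt0 -szX ltn_subRL.
  move: HF2; case E: F2 szF2 zF2 => [|z0 F3] // _ zF2 /negP; apply.
  have -> : z0 = nth a0 F (i0 + size X) by rewrite zF2. apply: (hmono a y) => //; first by rewrite mem_nth.
  - by rewrite ia0.
  - by rewrite -/ia (leq_trans _ iyB) // -addn1 leq_add2l.
  - by rewrite index_uniq // ia0 leq_addr.
have HB1 : forall B0 x, B1 = rcons B0 x -> ~~ (mem F) x.
  move=> B0 x E; apply/negP => xF.
  have ia_le : ia <= size B by apply: leq_trans szB; exact: leq_addr.
  have szB1 : size B1 = ia by rewrite size_takel.
  have iapos : 0 < ia by rewrite -szB1 E size_rcons.
  have xe : x = nth a0 B ia.-1.
    have xe1 : nth a0 B1 (size B1).-1 = x by rewrite E size_rcons nth_rcons ltnn eqxx.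
    by rewrite -xe1 szB1 nth_take // ltn_predL.
  have xB : x \in B by rewrite xe mem_nth // (leq_trans _ ia_le) // ltn_predL.
  have ixB : index a B = (index x B).+1 by rewrite xe index_uniq ?prednK // (leq_trans _ ia_le) // ltn_predL.
  have := hadj x a xF aF xB aB; rewrite ixB eqxx => /eqP ixF.
  have lt : index x F < i0 by rewrite -ia0 ixF.
  by move: (before_find a0 lt); rewrite nth_index // => /negbT/negP; apply.
have HXF : all (mem F) X by apply/allP => x xX /=; rewrite HF !mem_cat xX orbT.
have RB : runs (mem F) B = rcons (runs (mem F) B1) X by rewrite {1}HB (runs_back Hc' HXF X0 HB1).
have /and3P[_ dFX uF2] : [&& uniq (c ++ X), ~~ has (mem (c ++ X)) F2 & uniq F2] by rewrite -cat_uniq -catA -HF.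
have /and3P[uB1 dB _] : [&& uniq B1, ~~ has (mem B1) (X ++ c') & uniq (X ++ c')] by rewrite -cat_uniq -HB.
have T1 : forall x, x \in F2 -> (x \in B) = (x \in B1).
  move=> x xF2; rewrite {1}HB mem_cat; case: (x \in B1) => //=; rewrite mem_cat.
  apply/negP => /orP[xX|xc].
    by move/hasP: dFX; apply; exists x => //=; rewrite mem_cat xX orbT.
  have xF : x \in F by rewrite HF !mem_cat xF2 !orbT.
  by move: (allP Hc' x xc) => /= /negP; apply.
have T2 : forall x, x \in B1 -> (x \in F) = (x \in F2).
  move=> x xB1; rewrite {1}HF !mem_cat; apply/idP/idP => [|->]; last by rewrite !orbT.
  case/orP => [xc|/orP[xX|//]].
    have xB : x \in B by rewrite HB mem_cat xB1.
    by move: (allP Hc x xc) => /= /negP.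
  by move/hasP: dB => []; exists x => //=; rewrite mem_cat xX.
have iF : forall x, x \in F2 -> index x F = size c + size X + index x F2.
  move=> x xF2; rewrite {1}HF catA index_cat ifF ?size_cat //.
  by apply/negP => xcX; move/hasP: dFX; apply; exists x.
have iB : forall x, x \in B1 -> index x B = index x B1.
  by move=> x xB1; rewrite {1}HB index_cat xB1.
have F2F : forall x, x \in F2 -> x \in F by move=> x xF2; rewrite HF !mem_cat xF2 !orbT.
have B1B : forall x, x \in B1 -> x \in B by move=> x xB1; rewrite HB mem_cat xB1.
have IH' := IH F2 B1.
have E1 : runs (mem B) F2 = runs (mem B1) F2 := @runs_eq_in (mem B) (mem B1) [::] F2 T1.
have E2 : runs (mem F) B1 = runs (mem F2) B1 := @runs_eq_in (mem F) (mem F2) [::] B1 T2.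
rewrite RF RB rev_rcons E1 E2 IH' //.
- have : size F = size c + size X + size F2 by rewrite {1}HF catA size_cat size_cat.
  move=> e; have lt : size F2 < size F.
    by rewrite e addnC -{1}[size F2]addn0 ltn_add2l addn_gt0 X0pos orbT.
  by rewrite -ltnS (leq_trans lt szF).
- move=> x y xF2 yF2 xB1 yB1; have := hadj x y (F2F _ xF2) (F2F _ yF2) (B1B _ xB1) (B1B _ yB1).
  by rewrite !iF // !iB // -addnS eqn_add2l.
- move=> x y z xF2 yF2 xB1 yB1 zF2 h1 h2 h3; rewrite -T1 //.
  apply: (hmono x y); rewrite ?F2F ?B1B //.
  + by rewrite !iF // ltn_add2l.
  + by rewrite !iB.
  + by rewrite !iF // !leq_add2l.
Qed.

End Runs.

Section Walk.
Variables (V E : finType) (tl hd : E -> V) (k : nat).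
Notation EE := (E' E k).
Notation walk := (@walk' V E tl hd k).
Notation ipath := (@is_path V E tl hd k).
Notation hdE := (@hd' V E hd k).
Notation tlE := (@tl' V E tl k).

Definition vert (u : V) (l : seq EE) i := nth u (u :: map hdE l) i.

Lemma vert0 u l : vert u l 0 = u. Proof. by []. Qed.

Lemma vert_cons u e l j : j <= size l -> vert u (e :: l) j.+1 = vert (hdE e) l j.
Proof. by move=> jl; rewrite /vert /= (set_nth_default (hdE e)) // /= size_map ltnS. Qed.

Lemma walk_cons u v e l : walk u v (e :: l) = (tlE e == u) && walk (hdE e) v l.
Proof. by []. Qed.

Lemma walk_cat u w v l1 l2 : walk u w l1 -> walk w v l2 -> walk u v (l1 ++ l2).
Proof.
elim: l1 u => [|e l1 IH] u; first by move/eqP->.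
by rewrite cat_cons !walk_cons; case/andP=> -> /IH H /H.
Qed.

Lemma walk_take u v l j : walk u v l -> j <= size l -> walk u (vert u l j) (take j l).
Proof.
elim: l u j => [|e l IH] u j W jl; first by case: j jl => //= _; rewrite /vert /=.
case: j jl => [|j] jl; first by rewrite take0 /= eqxx.
move: W; rewrite walk_cons => /andP[/eqP te W].
by rewrite take_cons walk_cons te eqxx vert_cons // IH.
Qed.

Lemma walk_drop u v l j : walk u v l -> j <= size l -> walk (vert u l j) v (drop j l).
Proof.
elim: l u j => [|e l IH] u j W jl; first by case: j jl.
case: j jl => [|j] jl; first by rewrite drop0.
move: W; rewrite walk_cons => /andP[/eqP te W].
by rewrite vert_cons // drop_cons IH.
Qed.

Lemma vert_end u v l : walk u v l -> vert u l (size l) = v.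
Proof.
elim: l u => [|e l IH] u; first by move/eqP.
by rewrite walk_cons; case/andP=> _ W; rewrite vert_cons // IH.
Qed.

Lemma vert_drop u l i j : i <= j -> j <= size l ->
  vert (vert u l i) (drop i l) (j - i) = vert u l j.
Proof.
elim: i u l j => [|i IH] u l j; first by rewrite subn0 drop0.
case: l => [|e l] //; case: j => [|j] // ij jl.
rewrite ltnS in ij; rewrite /= ltnS in jl.
have il : i <= size l by apply: leq_trans ij jl.
by rewrite subSS (vert_cons u e il) [drop _ _]/= (vert_cons u e jl) IH.
Qed.

Lemma walk_seg u v l i j : walk u v l -> i <= j -> j <= size l ->
  walk (vert u l i) (vert u l j) (take (j - i) (drop i l)).
Proof.
move=> W ij jl; rewrite -(vert_drop u ij jl); apply: walk_take.
  apply: walk_drop W _; exact: leq_trans ij jl.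
by rewrite size_drop leq_sub2r.
Qed.

Lemma walk_tl u v l i e0 : walk u v l -> i < size l -> tlE (nth e0 l i) = vert u l i.
Proof.
elim: l u i => [|e l IH] u i W il; first by [].
move: W; rewrite walk_cons => /andP[/eqP te W].
case: i il => [|i] il; first by [].
have -> : nth e0 (e :: l) i.+1 = nth e0 l i by [].
by rewrite (IH _ _ W) // vert_cons // ltnW.
Qed.

Lemma hd_vert u l i e0 : i < size l -> hdE (nth e0 l i) = vert u l i.+1.
Proof. by move=> il; rewrite /vert /= (nth_map e0). Qed.

Lemma path_walk u v l : ipath u v l -> walk u v l.
Proof. by case/andP. Qed.

Lemma path_uniq u v l : ipath u v l -> uniq l.
Proof. by case/andP=> _ /= /andP[_ /map_uniq]. Qed.

Lemma path_vert_inj u v l i j : ipath u v l -> i <= size l -> j <= size l ->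
  vert u l i = vert u l j -> i = j.
Proof.
case/andP=> _ U il jl /eqP; rewrite /vert nth_uniq //= ?size_map ?ltnS //.
by move/eqP.
Qed.

Lemma consec u v F x y : ipath u v F -> x \in F -> y \in F -> hdE x = tlE y ->
  index y F = (index x F).+1.
Proof.
move=> P xF yF.
rewrite -{1}(nth_index x xF) -{1}(nth_index x yF).
rewrite (hd_vert u) ?index_mem // (@walk_tl u v F (index y F) x (path_walk P)) ?index_mem // => e.
by apply: esym; apply: (path_vert_inj P) => //; rewrite ?index_mem //; apply: ltnW; rewrite index_mem.
Qed.

Lemma revisit u v B i j e0 : ipath u v B -> i < size B -> j < size B ->
  tlE (nth e0 B i) = hdE (nth e0 B j) -> i = j.+1.
Proof.
move=> P il jl; rewrite (@walk_tl u v B i e0 (path_walk P)) // (hd_vert u) // => e.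
by apply: (path_vert_inj P) => //; apply: ltnW.
Qed.

Lemma walk2path (L : eqType) (lab : EE -> L) n : forall u v W, size W <= n -> walk u v W ->
  exists P, [/\ ipath u v P, {subset P <= W} & chg (map lab P) <= chg (map lab W)].
Proof.
elim: n => [|n IH] u v W szW Wk.
  case: W szW Wk => // _ Wk; exists [::]; split => //; by rewrite /is_path Wk.
case: (boolP (uniq (u :: map hdE W))) => uW.
  by exists W; split => //; rewrite /is_path Wk.
case/(uniqPn u): uW => i [j [ij jl eij]].
rewrite /= size_map ltnS in jl.
have il : i <= size W by apply: ltnW; apply: leq_trans ij jl.
have W' : walk u v (take i W ++ drop j W).
  apply: walk_cat (walk_take Wk il) _.
  have -> : vert u W i = vert u W j by [].
  exact: walk_drop.
have sz : size (take i W ++ drop j W) <= n.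
  rewrite size_cat size_takel // size_drop; lia.
have [P [P1 P2 P3]] := IH _ _ _ sz W'.
exists P; split => //.
  move=> x /P2; rewrite mem_cat => /orP[/mem_take|/mem_drop] //.
apply: leq_trans P3 _.
have -> : chg (map lab W) = chg (map lab (take i W ++ drop i (take j W) ++ drop j W)).
  by rewrite catA -{1}(take_takel W (ltnW ij)) !cat_take_drop.
rewrite !map_cat; exact: chg_del.
Qed.

End Walk.

Lemma ar1 a b : a < b -> b - a + a.+1 = b.+1. Proof. lia. Qed.
Lemma ar2 a b n : a < b -> b < n -> (b - a).-1 < n - a.+1. Proof. lia. Qed.
Lemma ar3 a b : a < b -> a.+1 + (b - a).-1 = b. Proof. lia. Qed.
Lemma ar4 a b n : a < b -> b < n -> b - a <= n - a.+1. Proof. lia. Qed.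

Section Main.
Variables (V E : finType) (tl hd : E -> V) (k : nat) (s t : V).
Notation EE := (E' E k).
Notation walk := (@walk' V E tl hd k).
Notation ipath := (@is_path V E tl hd k).
Notation hdE := (@hd' V E hd k).
Notation tlE := (@tl' V E tl k).
Notation vert := (@vert V E hd k).

Variable Fs : 'I_k -> seq EE.
Hypothesis HF : forall i, ipath s t (Fs i).
Hypothesis Hdis : forall i j, i != j -> forall e, e \in Fs i -> e \notin Fs j.
Variable H : pred EE.
Hypothesis HFH : forall i e, e \in Fs i -> H e.
Variable e0 : EE.

Definition lab (x : EE) : option 'I_k := [pick i | x \in Fs i].

Lemma labP i x : x \in Fs i -> lab x = Some i.
Proof.
move=> xi; rewrite /lab; case: pickP => [j xj|/(_ i)]; last by rewrite xi.
case: (eqVneq i j) => [->//|ij]; by have := Hdis ij xi; rewrite xj.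
Qed.

Lemma labS i x : lab x = Some i -> x \in Fs i.
Proof. by rewrite /lab; case: pickP => // j xj [<-]. Qed.

Lemma idx_inj (F : seq EE) x y : x \in F -> index x F = index y F -> index y F < size F -> x = y.
Proof.
move=> xF e yl; have yF : y \in F by rewrite -index_mem.
by rewrite -(nth_index e0 xF) e nth_index.
Qed.

Definition Mono i (B : seq EE) := forall a b, a < b -> b < size B ->
  nth e0 B a \in Fs i -> nth e0 B b \in Fs i ->
  index (nth e0 B a) (Fs i) < index (nth e0 B b) (Fs i) ->
  forall d, d <= b - a -> index (nth e0 B (a + d)) (Fs i) = index (nth e0 B a) (Fs i) + d.

Lemma chain i B a b : ipath t s B -> a <= b -> b < size B ->
  (forall d, d <= b - a -> nth e0 B (a + d) \in Fs i) ->
  forall d, d <= b - a -> index (nth e0 B (a + d)) (Fs i) = index (nth e0 B a) (Fs i) + d.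
Proof.
move=> PB ab bl inF; elim=> [|d IH] dl; first by rewrite !addn0.
have dl' : d <= b - a by apply: ltnW.
have lt1 : a + d < size B by apply: leq_ltn_trans _ bl; lia.
have lt2 : a + d.+1 < size B by apply: leq_ltn_trans _ bl; lia.
have e : hdE (nth e0 B (a + d)) = tlE (nth e0 B (a + d.+1)).
  by rewrite (hd_vert hd t) // (walk_tl e0 (path_walk PB)) // addnS.
by rewrite (consec (HF i) (inF _ dl') (inF _ dl) e) IH // addnS.
Qed.

Lemma mono_compat i B : ipath t s B -> Mono i B -> path_rev_compat (Fs i) B.
Proof.
move=> PB M.
set F := Fs i.
have uF : uniq F := path_uniq (HF i).
have uB : uniq B := path_uniq PB.
have PF : ipath s t F := HF i.
have M2 : forall x y, x \in B -> y \in B -> x \in F -> y \in F ->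
    index x B < index y B -> index x F < index y F ->
    forall d, d <= index y B - index x B -> index (nth e0 B (index x B + d)) F = index x F + d.
  move=> x y xB yB xF yF c1 c2 d dl.
  have := M _ _ c1; rewrite !nth_index // index_mem; exact.
have hadj : Hadj F B.
  move=> x y xF yF xB yB; apply/eqP/eqP => [e|e].
  - case: (ltngtP (index x B) (index y B)) => c.
    + have e2 := M2 _ _ xB yB xF yF c; rewrite e ltnSn in e2.
      have c' : 1 <= index y B - index x B by rewrite subn_gt0.
      have e3 := e2 isT 1 c'; rewrite !addn1 -e in e3.
      have yl : index (nth e0 B (index x B).+1) F < size F by rewrite e3 index_mem.
      have ey := idx_inj yF (esym e3) yl.
      have ixl : (index x B).+1 < size B by apply: leq_ltn_trans c _; rewrite index_mem.
      by rewrite ey -addn1 index_uniq // addn1.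
    + have h1 : hdE x = tlE y.
        rewrite -{1}(nth_index e0 xF) -{1}(nth_index e0 yF) (hd_vert hd s) ?index_mem //.
        by rewrite (walk_tl e0 (path_walk PF)) ?index_mem // e.
      have := @revisit _ _ _ _ _ _ _ _ (index y B) (index x B) e0 PB.
      rewrite !index_mem !nth_index // => /(_ yB xB (esym h1)) => h2.
      by move: c; rewrite h2 ltnNge leqnSn.
    + have ex : x = y by apply: (@idx_inj B) => //; rewrite index_mem.
      by move: e; rewrite ex => /eqP; rewrite -{1}[index y F]addn0 -addn1 eqn_add2l.
  - have h1 : hdE x = tlE y.
      rewrite -{1}(nth_index e0 xB) -{1}(nth_index e0 yB) (hd_vert hd t) ?index_mem //.
      by rewrite (walk_tl e0 (path_walk PB)) ?index_mem // e.
    exact: consec PF xF yF h1.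
have hmono : Hmono F B.
  move=> x y z xF yF xB yB zF c1 c2 /andP[c3 c4].
  have := M2 _ _ xB yB xF yF c2 c1 => M3.
  have ey : index y F = index x F + (index y B - index x B).
    rewrite -M3 // subnKC ?nth_index //; exact: ltnW.
  have dl : index z F - index x F <= index y B - index x B.
    by rewrite -(leq_add2l (index x F)) -ey subnKC.
  have := M3 _ dl; rewrite subnKC // => ez.
  have zl : index z F < size F by rewrite index_mem.
  have -> : z = nth e0 B (index x B + (index z F - index x F)).
    by apply: (idx_inj zF (esym ez)); rewrite ez index_mem.
  apply: mem_nth; apply: (@leq_ltn_trans (index y B)); last by rewrite index_mem.
  by rewrite -(subnKC (ltnW c2)) leq_add2l.
have ERC := @RC _ (size F) F B (leqnn _) uF uB hadj hmono.
rewrite /path_rev_compat /shared_in_F /shared_in_B -/F ERC size_rev; split => // j jl.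
by rewrite nth_rev // -(size_rev (runs _ _)).
Qed.


Lemma main_ind n : forall B, chg (map lab B) < n -> ipath t s B -> all H B ->
  exists B', [/\ ipath t s B', all H B' & forall i, path_rev_compat (Fs i) B'].
Proof.
elim: n => [|n IH] B // cB PB HB.
case: (classic (exists i a b d, a < b /\ b < size B /\ nth e0 B a \in Fs i /\ nth e0 B b \in Fs i /\
   index (nth e0 B a) (Fs i) < index (nth e0 B b) (Fs i) /\ d <= b - a /\
   index (nth e0 B (a + d)) (Fs i) != index (nth e0 B a) (Fs i) + d)) =>
   [[i [a [b [d [ab [bl [xF [yF [pxy [dl ne]]]]]]]]]]|nex]; last first.
  exists B; split => // i; apply: mono_compat PB _.
  move=> a b ab bl xF yF pxy d dl; apply/eqP/negPn/negP => ne; apply: nex.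
  by exists i, a, b, d.
set F := Fs i.
set x := nth e0 B a; set y := nth e0 B b.
set px := index x F; set py := index y F.
have al : a < size B := ltn_trans ab bl.
have pxl : px < size F by rewrite index_mem.
have pyl : py < size F by rewrite index_mem.
have WB := path_walk PB; have WF := path_walk (HF i).
set seg := take (py - px).+1 (drop px F).
set W := take a B ++ seg ++ drop b.+1 B.
have w1 : walk t (vert t B a) (take a B) := walk_take WB (ltnW al).
have w2 : walk (vert s F px) (vert s F py.+1) seg.
  have := walk_seg WF (leqW (ltnW pxy)) pyl; by rewrite subSn // ltnW.
have w3 : walk (vert t B b.+1) s (drop b.+1 B) := walk_drop WB bl.
have v1 : vert t B a = vert s F px.
  rewrite -(walk_tl e0 WB al) -(walk_tl e0 WF pxl) /px nth_index //.
have v2 : vert s F py.+1 = vert t B b.+1.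
  by rewrite -(hd_vert hd s e0 pyl) -(hd_vert hd t e0 bl) /py nth_index.
have WW : walk t s W.
  apply: walk_cat w1 _; rewrite v1; apply: walk_cat w2 _; by rewrite v2.
have segF : forall z, z \in seg -> z \in F by move=> z /mem_take /mem_drop.
have HW : all H W.
  rewrite /W !all_cat; apply/and3P; split; apply/allP => z.
  - by move/mem_take => zB; exact: (allP HB).
  - by move/segF; exact: HFH.
  - by move/mem_drop => zB; exact: (allP HB).
have [P [P1 P2 P3]] := walk2path lab (leqnn (size W)) WW.
have lx : lab x = Some i by exact: labP.
have ly : lab y = Some i by exact: labP.
set lB := take (b - a) (drop a.+1 B).
set lF := take (py - px) (drop px.+1 F).
have eB : map lab B = map lab (take a B) ++ Some i :: map lab lB ++ map lab (drop b.+1 B).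
  have -> : drop b.+1 B = drop (b - a) (drop a.+1 B) by rewrite drop_drop ar1.
  rewrite -lx -map_cat -map_cons -map_cat; congr map.
  by rewrite /lB cat_take_drop /x -drop_nth // cat_take_drop.
have eW : map lab W = map lab (take a B) ++ Some i :: map lab lF ++ map lab (drop b.+1 B).
  rewrite /W /seg (drop_nth e0 pxl) /px nth_index // -/px take_cons -lx.
  by rewrite !map_cat.
have allF : all (pred1 (Some i)) (map lab lF).
  apply/allP => z /mapP [z' z'l ->] /=; apply/eqP; apply: labP.
  by move: z'l => /mem_take /mem_drop.
have lastF : last (Some i) (map lab lF) = Some i by exact: last_pred1.
have lastB : last (Some i) (map lab lB) = Some i.
  have ba : 0 < b - a by rewrite subn_gt0.
  rewrite /lB -(prednK ba) (take_nth e0); last first.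
    by rewrite size_drop ar2.
  rewrite map_rcons last_rcons nth_drop.
  rewrite ar3 //.
have chgB : 0 < chg (Some i :: map lab lB).
  rewrite lt0n; apply/negP => /eqP /chg0 allB.
  have inF : forall d', d' <= b - a -> nth e0 B (a + d') \in F.
    case=> [|d'] dl'; first by rewrite addn0.
    have szlB : size lB = b - a by rewrite size_takel // size_drop ar4.
    have zl : nth e0 lB d' \in lB by rewrite mem_nth // szlB.
    have -> : nth e0 B (a + d'.+1) = nth e0 lB d' by rewrite nth_take // nth_drop addSnnS.
    apply: labS; apply/eqP; exact: (allP allB _ (map_f lab zl)).
  by move: ne; rewrite (chain PB (ltnW ab) bl inF dl) eqxx.
have cW : chg (map lab W) < chg (map lab B).
  rewrite eB eW; apply: chg_repl => //.
  by rewrite chg_const.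
have cP : chg (map lab P) < n.
  apply: (leq_ltn_trans P3); apply: (leq_trans cW); exact: cB.
have HP : all H P by apply/allP => z /P2 zW; exact: (allP HW).
have [B' [Q1 Q2 Q3]] := IH P cP P1 HP.
by exists B'.
Qed.

End Main.

Import Order.TTheory GRing.Theory Num.Theory.

Lemma path_size (V E : finType) (tl hd : E -> V) k u v (l : seq (E' E k)) :
  is_path tl hd u v l -> size l < #|V|.
Proof.
case/andP => _ U; have := max_card (mem (u :: map (@hd' V E hd k) l)).
by rewrite (card_uniqP U) /= size_map.
Qed.

Fixpoint allseqs (T : finType) (n : nat) : seq (seq T) :=
  if n is m.+1 then [::] :: [seq x :: l | x <- enum T, l <- allseqs T m] else [:: [::]].

Lemma allseqsP (T : finType) n (l : seq T) : size l <= n -> l \in allseqs T n.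
Proof.
elim: n l => [|n IH] [|x l] //= sl; rewrite inE; apply/orP; right.
apply: (allpairs_f (fun x l => x :: l)); [by rewrite mem_enum | exact: IH].
Qed.

Fixpoint allcodes (X : eqType) (A : seq X) (m : nat) : seq (seq X) :=
  if m is m'.+1 then [seq c :: cs | c <- A, cs <- allcodes A m'] else [:: [::]].

Lemma allcodesP (X : eqType) (A : seq X) cs : all (mem A) cs -> cs \in allcodes A (size cs).
Proof.
elim: cs => [|c cs IH] /=; first by rewrite inE.
case/andP => cA /IH H; exact: (allpairs_f (fun c cs => c :: cs)).
Qed.

Lemma argmin (X : eqType) (R : realFieldType) (L : seq X) (P : X -> Prop) (f : X -> R) :
  (exists x, x \in L /\ P x) ->
  exists x, [/\ x \in L, P x & forall y, y \in L -> P y -> (f x <= f y)%R].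
Proof.
elim: L => [|a L IH] [x [xL Px]] //.
case: (classic (exists x, x \in L /\ P x)) => [ex|nex].
  have [m [mL Pm Hm]] := IH ex.
  case: (classic (P a)) => Pa; last first.
    exists m; split => //; first by rewrite inE mL orbT.
    by move=> y; rewrite inE => /orP[/eqP->//|yL]; exact: Hm.
  case/orP: (le_total (f a) (f m)) => h.
    exists a; split => //; first by rewrite mem_head.
    move=> y; rewrite inE => /orP[/eqP->//|yL] Py; exact: le_trans h (Hm _ yL Py).
  exists m; split => //; first by rewrite inE mL orbT.
  by move=> y; rewrite inE => /orP[/eqP->//|yL]; exact: Hm.
exists a; split; first by rewrite mem_head.
- move: xL; rewrite inE => /orP[/eqP<-//|xL]; by case: nex; exists x.
- move=> y; rewrite inE => /orP[/eqP->//|yL] Py; by case: nex; exists y.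
Qed.

Lemma cost_mono (E : finType) k (R : realFieldType) (w : E -> R) (hw : forall e, (0 <= w e)%R)
  (Fs : 'I_k -> seq (E' E k)) B B' :
  {subset B' <= [pred x | [exists i, x \in Fs i] || (x \in B)]} ->
  (cost w Fs B' <= cost w Fs B)%R.
Proof.
move=> sub; rewrite /cost [X in (X <= _)%R]big_mkcond [X in (_ <= X)%R]big_mkcond.
apply: ler_sum => x _; case: ifP => h1; case: ifP => h2 //.
case/orP: h1 => [h|/sub]; first by rewrite h in h2.
by rewrite inE h2.
Qed.

Local Open Scope ring_scope.

Theorem lemma2 (V E : finType) (tl hd : E -> V) (R : realFieldType)
  (w : E -> R) (hw : forall e, 0 <= w e) (s t : V) (k : nat) (hk : (0 < k)%N)
  (hfeas : exists (Fs : 'I_k -> seq (E' E k)) (B : seq (E' E k)),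
      feasible tl hd s t Fs B) :
  exists (Fs : 'I_k -> seq (E' E k)) (B : seq (E' E k)),
    [/\ feasible tl hd s t Fs B,
        (forall (Fs' : 'I_k -> seq (E' E k)) (B' : seq (E' E k)),
            feasible tl hd s t Fs' B' -> cost w Fs B <= cost w Fs' B')
      & rev_compat Fs B].
Proof.
have [Fs0 [B0 feas0]] := hfeas.
pose N := #|V|.
pose A := allseqs (E' E k) N.
pose cand := [seq (cs, b) | cs <- allcodes A k, b <- A].
pose G (c : seq (seq (E' E k)) * seq (E' E k)) := fun i : 'I_k => nth [::] c.1 i.
pose enc (Fs : 'I_k -> seq (E' E k)) (B : seq (E' E k)) := ([seq Fs i | i <- enum 'I_k], B).
have encG : forall Fs B, G (enc Fs B) = Fs.
  move=> Fs B; apply: functional_extensionality => i.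
  by rewrite /G /= (nth_map i) ?size_enum_ord // nth_ord_enum.
have encC : forall Fs B, feasible tl hd s t Fs B -> enc Fs B \in cand.
  move=> Fs B [PF _ PB]; apply: allpairs_f; last first.
    by apply: allseqsP; apply: ltnW; exact: path_size PB.
  have := @allcodesP _ A [seq Fs i | i <- enum 'I_k]; rewrite size_map size_enum_ord; apply.
  apply/allP => l /mapP [i _ ->].
  by apply: allseqsP; apply: ltnW; exact: path_size (PF i).
have ex : exists x, x \in cand /\ feasible tl hd s t (G x) x.2.
  by exists (enc Fs0 B0); split; [exact: encC | rewrite encG].
have [c [cC cP cM]] := @argmin _ R cand (fun c => feasible tl hd s t (G c) c.2)
    (fun c => cost w (G c) c.2) ex.
set Fs := G c; set B := c.2.
have opt : forall (Fs' : 'I_k -> seq (E' E k)) (B' : seq (E' E k)), feasible tl hd s t Fs' B' -> cost w Fs B <= cost w Fs' B'.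
  move=> Fs' B' f'; have := cM (enc Fs' B') (encC _ _ f'); rewrite /= encG; exact.
case: cP => PF Dis PB.
case EB: B => [|e0 B1].
  exists Fs, B; split; [by split | exact: opt | ].
  move=> i; rewrite /path_rev_compat /shared_in_F /shared_in_B EB runs_nil //=.
  by apply/allP => x.
pose H := [pred x | [exists i, x \in Fs i] || (x \in B)].
have HFH : forall i e, e \in Fs i -> H e.
  by move=> i e ei; rewrite inE; apply/orP; left; apply/existsP; exists i.
have HB : all H B by apply/allP => x xB; rewrite inE xB orbT.
have [B2 [Q1 Q2 Q3]] := main_ind PF Dis HFH e0 (ltnSn _) PB HB.
exists Fs, B2; split => //.
move=> Fs' B' f'; apply: le_trans (opt _ _ f').
apply: cost_mono => // x xB2; exact: (allP Q2).
Qed.
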